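(* Let $C=(Q,\Sigma,\Psi)$ be a HMM with an independent functional decomposition $\Psi=\sum_{k=1}^d f_kP_k$ in which every $P_k$ is non-negative. Let $\overline\Sigma=\{a_1,\dots,a_d\}$ be a set of fresh observations and let $F=(Q,\overline\Sigma,M)$ with $M(a_k)=P_k$ for $k\in[d]$. Then $F$ is a finite-observation HMM, and for any initial distributions $\pi_1,\pi_2$, $\pi_1\equiv_C\pi_2$ if and only if $\pi_1\equiv_F\pi_2$.
   Context: Let $(\Sigma,\mathscr{G},\lambda)$ be a measure space where $\Sigma$ is a topological space and every open subset belongs to $\mathscr{G}$ and has positive measure. A HMM is $(Q,\Sigma,\Psi)$ with $Q$ finite and $\Psi:\Sigma\to[0,\infty)^{|Q|\times|Q|}$ piecewise continuous (continuous on an open set $C'$ such that every point outside $C'$ is a limit of points $x_n\in C'$ with $\Psi(x_n)$ converging to its value) with entrywise integral $\int_\Sigma\Psi\,d\lambda$ stochastic. A finite-observation HMM has finite $\Sigma$ with counting measure, so the condition is that $\sum_{a}\Psi(a)$ is stochastic. With $\Psi(x_1\cdots x_n)=\Psi(x_1)\cdots\Psi(x_n)$, an initial distribution $\pi$ induces the unique probability measure $\mathbb{P}_\pi$ on $\Sigma^\omega$ with $\mathbb{P}_\pi(A\Sigma^\omega)=\pi\left(\int_A\Psi\,d\lambda^n\right)\mathbbm{1}^T$ for cylinder sets $A=A_1\times\dots\times A_n$; $\pi_1\equiv\pi_2$ means $\mathbb{P}_{\pi_1}=\mathbb{P}_{\pi_2}$. An independent functional decomposition consists of linearly independent functions $f_k:\Sigma\to[0,\infty)$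 with $\int_\Sigma f_k\,d\lambda=1$ and matrices $P_k\in\mathbb{R}^{|Q|\times|Q|}$ such that $\Psi(x)=\sum_{k=1}^d f_k(x)P_k$ for all $x$. *)

(* Defs.v *)
From HB Require Import structures.
From mathcomp Require Import all_boot all_order all_algebra.
From mathcomp Require Import all_classical all_reals all_analysis.

Set Implicit Arguments.
Unset Strict Implicit.
Unset Printing Implicit Defensive.

Import Order.TTheory GRing.Theory Num.Theory.
Import numFieldNormedType.Exports.
Local Open Scope classical_set_scope.
Local Open Scope ring_scope.

#[short(type="topMeasurableType")]
HB.structure Definition TopMeasurable (d : measure_display) :=
  {T of Measurable d T & Topological T}.

Section HMMDefs.
Context {R : realType} {d : measure_display} {T : topMeasurableType d}.

Definition open_positive (mu : {measure set T -> \bar R}) : Prop :=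
  forall U : set T, open U -> measurable U /\ (U !=set0 -> (0 < mu U)%E).

Definition nonneg_mx {m n : nat} (P : 'M[R]_(m, n)) : Prop :=
  forall i j, 0 <= P i j.

Definition stochastic {n : nat} (P : 'M[R]_n) : Prop :=
  nonneg_mx P /\ forall i, \sum_(j < n) P i j = 1.

Definition init_distr {n : nat} (pi : 'rV[R]_n) : Prop :=
  (forall j, 0 <= pi 0 j) /\ \sum_(j < n) pi 0 j = 1.

Definition piecewise_continuous {n : nat} (Psi : T -> 'M[R]_n) : Prop :=
  exists C' : set T, open C' /\
    (forall x, C' x -> forall i j, {for x, continuous ((fun y => Psi y i j) : T -> R)}) /\
    (forall x, ~ C' x -> exists u : nat -> T,
        (forall k, C' (u k)) /\ u @ \oo --> x /\
        (forall i j, ((fun k => Psi (u k) i j) : nat -> R) @ \oo --> (Psi x i j : R))).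

Definition int_mx {n : nat} (mu : {measure set T -> \bar R})
    (Psi : T -> 'M[R]_n) (A : set T) : 'M[R]_n :=
  \matrix_(i, j) fine (\int[mu]_(x in A) (Psi x i j)%:E)%E.

Definition HMM {n : nat} (mu : {measure set T -> \bar R})
    (Psi : T -> 'M[R]_n) : Prop :=
  (forall x, nonneg_mx (Psi x)) /\
  (forall i j, measurable_fun setT (fun x => Psi x i j)) /\
  piecewise_continuous Psi /\
  (forall i j, (\int[mu]_x (Psi x i j)%:E < +oo)%E) /\
  stochastic (int_mx mu Psi setT).

(* Probability of the cylinder set A_1 x ... x A_m x Sigma^omega under P_pi:
   pi (int_{A_1 x ... x A_m} Psi d lambda^m) 1^T, where the entrywise integral
   of Psi(x_1)...Psi(x_m) over the product set factors as the product of the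
   entrywise integrals over the A_i. *)
Definition cyl_prob {n : nat} (mu : {measure set T -> \bar R})
    (Psi : T -> 'M[R]_n) (pi : 'rV[R]_n) (m : nat) (A : 'I_m -> set T) : R :=
  (pi *m (\prod_(i < m) int_mx mu Psi (A i)) *m (const_mx 1 : 'cV[R]_n)) 0 0.

(* pi1 == pi2 in the HMM: the induced measures on Sigma^omega coincide,
   i.e. (by uniqueness of the extension) they agree on all measurable
   cylinder sets. *)
Definition hmm_equiv {n : nat} (mu : {measure set T -> \bar R})
    (Psi : T -> 'M[R]_n) (pi1 pi2 : 'rV[R]_n) : Prop :=
  forall (m : nat) (A : 'I_m -> set T), (forall i, measurable (A i)) ->
    cyl_prob mu Psi pi1 A = cyl_prob mu Psi pi2 A.

Definition lin_indep_fun {dd : nat} (f : 'I_dd -> T -> R) : Prop :=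
  forall c : 'I_dd -> R, (forall x, \sum_(k < dd) c k * f k x = 0) ->
    forall k, c k = 0.

Definition indep_fun_decomp {n dd : nat} (mu : {measure set T -> \bar R})
    (Psi : T -> 'M[R]_n) (f : 'I_dd -> T -> R) (P : 'I_dd -> 'M[R]_n) : Prop :=
  lin_indep_fun f /\
  (forall k x, 0 <= f k x) /\
  (forall k, measurable_fun setT (f k)) /\
  (forall k, (\int[mu]_x (f k x)%:E = 1)%E) /\
  (forall x, Psi x = \sum_(k < dd) f k x *: P k).

End HMMDefs.

Section FinHMMDefs.
Context {R : realType}.

Definition fin_HMM {n dd : nat} (M : 'I_dd -> 'M[R]_n) : Prop :=
  (forall a, nonneg_mx (M a)) /\ stochastic (\sum_(a < dd) M a).

(* Cylinder probability for a finite-observation HMM: integrals w.r.t. the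
   counting measure are finite sums. *)
Definition fin_cyl_prob {n dd : nat} (M : 'I_dd -> 'M[R]_n) (pi : 'rV[R]_n)
    (m : nat) (A : 'I_m -> {set 'I_dd}) : R :=
  (pi *m (\prod_(i < m) \sum_(a in A i) M a) *m (const_mx 1 : 'cV[R]_n)) 0 0.

Definition fin_hmm_equiv {n dd : nat} (M : 'I_dd -> 'M[R]_n)
    (pi1 pi2 : 'rV[R]_n) : Prop :=
  forall (m : nat) (A : 'I_m -> {set 'I_dd}),
    fin_cyl_prob M pi1 A = fin_cyl_prob M pi2 A.

End FinHMMDefs.

(* Main.v *)
Require Import Defs.
From HB Require Import structures.
From mathcomp Require Import all_boot all_order all_algebra.
From mathcomp Require Import all_classical all_reals all_analysis.
From mathcomp Require Import measurable_realfun.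

Import Order.TTheory GRing.Theory Num.Theory.
Import numFieldNormedType.Exports.
Local Open Scope classical_set_scope.
Local Open Scope ring_scope.

Lemma cvg_sum_fun (R : realType) (U : Type) (F : set_system U) {FF : Filter F}
  (I : Type) (s : seq I) (h : I -> U -> R) (l : I -> R) :
  (forall i, h i @ F --> l i) ->
  (fun x => \sum_(i <- s) h i x) @ F --> \sum_(i <- s) l i.
Proof.
move=> H; elim: s => [|i s IH].
  under eq_fun do rewrite big_nil; rewrite big_nil; exact: cvg_cst.
under eq_fun do rewrite big_cons; rewrite big_cons.
exact: (cvgD (H i) IH).
Qed.

Section Main.
Context {R : realType} {d : measure_display} {T : topMeasurableType d}
  {mu : {measure set T -> \bar R}} {n dd : nat} {Psi : T -> 'M[R]_n}
  {f : 'I_dd -> T -> R} {P : 'I_dd -> 'M[R]_n}.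
Hypothesis Hf0 : forall k x, 0 <= f k x.
Hypothesis Hfm : forall k, measurable_fun setT (f k).
Hypothesis Hf1 : forall k, (\int[mu]_x (f k x)%:E = 1)%E.
Hypothesis HPsi : forall x, Psi x = \sum_(k < dd) f k x *: P k.

Lemma fint k A : measurable A -> mu.-integrable A (EFin \o f k).
Proof.
move=> mA; apply: (integrableS measurableT) => //.
apply/integrableP; split; first exact/measurable_EFinP.
under eq_integral do rewrite /= ger0_norm//.
by rewrite Hf1 ltry.
Qed.

Lemma LIN A (mA : measurable A) (w : 'I_dd -> R) :
  (\int[mu]_(x in A) (\sum_(k < dd) w k * f k x)%:E
   = (\sum_(k < dd) w k * fine (\int[mu]_(x in A) (f k x)%:E))%:E)%E.
Proof.
under eq_integral do rewrite -sumEFin.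
rewrite integral_sum //; last first.
  move=> k; have H := integrableZl mA (w k) (fint k A mA).
  apply: (eq_integrable mA _ _ _ H) => x _.
  by rewrite EFinM.
rewrite -sumEFin; apply: eq_bigr => k _.
under eq_integral do rewrite EFinM.
rewrite (integralZl mA (fint k A mA)).
by rewrite EFinM fineK // (integrable_fin_num mA (fint k A mA)).
Qed.

Lemma INT A : measurable A ->
  int_mx mu Psi A = \sum_(k < dd) fine (\int[mu]_(x in A) (f k x)%:E) *: P k.
Proof.
move=> mA; apply/matrixP => i j; rewrite !mxE summxE.
under eq_integral do rewrite HPsi summxE.
under eq_integral => x _ do under eq_bigr => k _ do rewrite mxE mulrC.
rewrite LIN //=; apply: eq_bigr => k _; by rewrite mxE mulrC.
Qed.


Definition gf (a : 'rV[R]_n) (b : 'cV[R]_n) x := (a *m Psi x *m b) 0 0.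

Lemma lfun_sum (a : 'rV[R]_n) (b : 'cV[R]_n) (I : Type) (r : seq I)
  (c : I -> R) (M : I -> 'M[R]_n) :
  (a *m (\sum_(i <- r) c i *: M i) *m b) 0 0
  = \sum_(i <- r) c i * (a *m M i *m b) 0 0.
Proof.
rewrite mulmx_sumr mulmx_suml summxE; apply: eq_bigr => i _.
by rewrite -scalemxAr -scalemxAl mxE.
Qed.

Lemma g_lin a b x : gf a b x = \sum_(k < dd) (a *m P k *m b) 0 0 * f k x.
Proof. rewrite /gf HPsi lfun_sum; apply: eq_bigr => k _; exact: mulrC. Qed.

Lemma g_expand a b x :
  gf a b x = \sum_(i < n) \sum_(j < n) (Psi x i j * (a 0 i * b j 0)).
Proof.
rewrite /gf mxE; under eq_bigr do rewrite mxE big_distrl.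
rewrite exchange_big; apply: eq_bigr => i _; apply: eq_bigr => j _ /=.
by rewrite mulrAC mulrC.
Qed.

Lemma g_int a b A : measurable A ->
  (\int[mu]_(x in A) (gf a b x)%:E = ((a *m int_mx mu Psi A *m b) 0 0)%:E)%E.
Proof.
move=> mA; under eq_integral do rewrite g_lin.
rewrite LIN // INT // lfun_sum; congr EFin; apply: eq_bigr => k _.
exact: mulrC.
Qed.

Lemma g_integrable a b A : measurable A -> mu.-integrable A (EFin \o gf a b).
Proof.
move=> mA.
apply: (eq_integrable mA
  (fun x => \sum_(k < dd) ((a *m P k *m b) 0 0)%:E * (EFin \o f k) x)%E).
  by move=> x _; rewrite /= g_lin -sumEFin; apply: eq_bigr => k _; rewrite EFinM.
apply: (integrable_sum mA) => k _; exact: (integrableZl mA _ (fint k A mA)).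
Qed.

Variable C' : set T.
Hypothesis oC : open C'.
Hypothesis cC : forall x, C' x -> forall i j,
  {for x, continuous ((fun y => Psi y i j) : T -> R)}.
Hypothesis sC : forall x, ~ C' x -> exists u : nat -> T,
        (forall k, C' (u k)) /\ u @ \oo --> x /\
        (forall i j, ((fun k => Psi (u k) i j) : nat -> R) @ \oo --> (Psi x i j : R)).
Hypothesis Hop : open_positive mu.
Hypothesis Hlin : lin_indep_fun f.

Lemma g_cont a b x : C' x -> {for x, continuous (gf a b)}.
Proof.
move=> Cx.
have E : gf a b = fun y => \sum_(i < n) \sum_(j < n) (Psi y i j * (a 0 i * b j 0)).
  by apply: funext => y; exact: g_expand.
rewrite E /=.
apply: cvg_sum_fun => i; apply: cvg_sum_fun => j.
apply: cvgMr_tmp; exact: cC.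
Qed.

Lemma POS_C a b : (forall A, measurable A -> (a *m int_mx mu Psi A *m b) 0 0 = 0) ->
  forall x, C' x -> gf a b x <= 0.
Proof.
move=> H x Cx; rewrite leNgt; apply/negP => gx.
pose e := gf a b x / 2.
have e0 : 0 < e by rewrite divr_gt0.
have ex : e < gf a b x by rewrite /e ltr_pdivrMr // ltr_pMr // ltr1n.
pose U := [set y | C' y /\ e < gf a b y].
have oU : open U.
  rewrite openE => y [Cy ey].
  have N1 : nbhs y C' by move: oC; rewrite openE => /(_ y Cy).
  have N2 : nbhs y (fun t => e < gf a b t) by apply: (cvgr_gt _ (g_cont a b y Cy)).
  idtac.
  change (nbhs y U). have NI := @filterI _ _ (nbhs_filter y) _ _ N1 N2. apply: filterS NI => z [? ?]; by split.
have [mU pU] := Hop U oU.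
have mupos := pU (ex_intro _ x (conj Cx ex)).
have Hint := g_int a b U mU; rewrite H // in Hint.
have : (e%:E * mu U <= \int[mu]_(x in U) (gf a b x)%:E)%E.
  rewrite -(integral_cst mu mU); apply: ge0_le_integral => //.
  - by move=> y _; rewrite lee_fin ltW.
  - exact: measurable_int (g_integrable a b U mU).
  - by move=> y [_ ey]; rewrite /= lee_fin ltW.
by rewrite Hint leNgt mule_gt0 // lte_fin.
Qed.

Lemma POS a b : (forall A, measurable A -> (a *m int_mx mu Psi A *m b) 0 0 = 0) ->
  forall x, gf a b x <= 0.
Proof.
move=> H x; have [Cx|nCx] := pselect (C' x); first exact: POS_C.
have [u [uC [ux uPsi]]] := sC x nCx.
rewrite leNgt; apply/negP => gx.
have cg : (fun k => gf a b (u k)) @ \oo --> gf a b x.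
  under eq_fun do rewrite g_expand; rewrite g_expand.
  apply: cvg_sum_fun => i; apply: cvg_sum_fun => j.
  apply: cvgMr_tmp; exact: uPsi.
have [k hk] := filter_ex (cvgr_gt _ cg _ gx).
by have := POS_C a b H (u k) (uC k); rewrite leNgt hk.
Qed.

Lemma KEY (a : 'rV[R]_n) (b : 'cV[R]_n) : (forall A, measurable A -> (a *m int_mx mu Psi A *m b) 0 0 = 0) ->
  forall k, (a *m P k *m b) 0 0 = 0.
Proof.
move=> H.
have g0 : forall x, gf a b x = 0.
  move=> x; apply/eqP; rewrite eq_le POS //=.
  have := @POS (- a) b _ x; rewrite /gf !mulNmx mxE oppr_le0; apply.
  by move=> A mA; rewrite !mulNmx mxE H // oppr0.
apply: (Hlin (fun k => (a *m P k *m b) 0 0)) => x.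
by rewrite -g_lin.
Qed.

End Main.

Section Comb.
Context {R : realType} {n dd : nat} (P : 'I_dd -> 'M[R]_n).

Lemma mulE (A B : 'M[R]_n) : A * B = A *m B. Proof. by []. Qed.

Lemma prod_rcons s k : \prod_(j <- rcons s k) P j = \prod_(j <- s) P j * P k.
Proof. by rewrite -cats1 big_cat big_seq1. Qed.

Lemma STEP2 (dl : 'rV[R]_n) :
  (forall s, (dl *m \prod_(k <- s) P k *m (const_mx 1 : 'cV[R]_n)) 0 0 = 0) ->
  forall m (c : 'I_m -> 'I_dd -> R) s,
  (dl *m (\prod_(k <- s) P k * \prod_(i < m) \sum_(k < dd) c i k *: P k)
      *m (const_mx 1 : 'cV[R]_n)) 0 0 = 0.
Proof.
move=> W; elim=> [|m IH] c s.
  by rewrite big_ord0 mulr1.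
rewrite big_ord_recl mulrA mulr_sumr mulr_suml.
rewrite (eq_bigr (fun k => c ord0 k *: (\prod_(j <- rcons s k) P j *
   \prod_(i < m) \sum_(k0 < dd) c (lift ord0 i) k0 *: P k0))); last first.
  by move=> k _; rewrite prod_rcons !mulE -scalemxAr -scalemxAl.
rewrite lfun_sum big1 // => k _.
by rewrite (IH (fun i => c (lift ord0 i)) (rcons s k)) mulr0.
Qed.

Lemma STEP1 (dl : 'rV[R]_n) (G : Type) (int : G -> 'M[R]_n) (ok : G -> Prop) :
  (forall (a : 'rV[R]_n) (b : 'cV[R]_n),
     (forall A, ok A -> (a *m int A *m b) 0 0 = 0) ->
     forall k, (a *m P k *m b) 0 0 = 0) ->
  (forall m (A : 'I_m -> G), (forall i, ok (A i)) ->
     (dl *m \prod_(i < m) int (A i) *m (const_mx 1 : 'cV[R]_n)) 0 0 = 0) ->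
  forall s m (A : 'I_m -> G), (forall i, ok (A i)) ->
     (dl *m (\prod_(k <- s) P k * \prod_(i < m) int (A i))
        *m (const_mx 1 : 'cV[R]_n)) 0 0 = 0.
Proof.
move=> KEYH H0; elim/last_ind => [|s k IH] m A oA.
  by rewrite big_nil mul1r; apply: H0.
rewrite prod_rcons.
have -> : dl *m (\prod_(j <- s) P j * P k * \prod_(i < m) int (A i))
   *m (const_mx 1 : 'cV[R]_n)
  = (dl *m \prod_(j <- s) P j) *m P k *m
    (\prod_(i < m) int (A i) *m (const_mx 1 : 'cV[R]_n)).
  by rewrite !mulE !mulmxA.
apply: KEYH => A0 oA0.
pose A' := fun i : 'I_m.+1 => if unlift ord0 i is Some j then A j else A0.
have oA' : forall i, ok (A' i) by move=> i; rewrite /A'; case: unlift.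
have := IH m.+1 A' oA'.
rewrite big_ord_recl /A' unlift_none.
rewrite (eq_bigr (fun i => int (A i))); last by move=> i _; rewrite liftK.
by rewrite !mulE !mulmxA.
Qed.

End Comb.

Theorem proposition19 (R : realType) (d : measure_display)
  (T : topMeasurableType d) (mu : {measure set T -> \bar R})
  (n dd : nat) (Psi : T -> 'M[R]_n)
  (f : 'I_dd -> T -> R) (P : 'I_dd -> 'M[R]_n) :
  open_positive mu ->
  HMM mu Psi ->
  indep_fun_decomp mu Psi f P ->
  (forall k, nonneg_mx (P k)) ->
  fin_HMM P /\
  (forall pi1 pi2 : 'rV[R]_n, init_distr pi1 -> init_distr pi2 ->
     (hmm_equiv mu Psi pi1 pi2 <-> fin_hmm_equiv P pi1 pi2)).
Proof.
move=> Hop [HPnn [Hmeas [[C' [oC [cC sC]]] [Hfin Hst]]]]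
  [Hlin [Hf0 [Hfm [Hf1 HPsi]]]] HP.
have INTs := INT Hf0 Hfm Hf1 HPsi.
have KEYH := KEY Hf0 Hfm Hf1 HPsi C' oC cC sC Hop Hlin.
split.
  split => //; split.
    by move=> i j; rewrite summxE; apply: sumr_ge0 => k _; exact: HP.
  have -> : \sum_(a < dd) P a = int_mx mu Psi setT.
    by rewrite INTs //; apply: eq_bigr => k _; rewrite Hf1 /= scale1r.
  exact: Hst.2.
move=> p1 p2 _ _.
have eqd : forall M : 'M[R]_n,
  (p1 *m M *m (const_mx 1 : 'cV[R]_n)) 0 0 = (p2 *m M *m (const_mx 1 : 'cV[R]_n)) 0 0
  <-> ((p1 - p2) *m M *m (const_mx 1 : 'cV[R]_n)) 0 0 = 0.
  move=> M; rewrite !mulmxBl; set x1 := p1 *m M *m _; set x2 := p2 *m M *m _.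
  rewrite !mxE; split => [->|H]; first by rewrite subrr.
  by apply/eqP; rewrite -subr_eq0; apply/eqP.
split.
- move=> H m A; rewrite /fin_cyl_prob; apply/eqd.
  have W : forall s, ((p1 - p2) *m \prod_(k <- s) P k *m (const_mx 1 : 'cV[R]_n)) 0 0 = 0.
    move=> s.
    have := @STEP1 R n dd P (p1 - p2) _ (int_mx mu Psi) (fun A => measurable A)
      KEYH _ s 0 (fun _ => setT) (fun _ => measurableT).
    rewrite big_ord0 mulr1; apply.
    by move=> m' A' oA'; apply/eqd; exact: H.
  suff -> : \prod_(i < m) \sum_(a in A i) P a
          = \prod_(i < m) \sum_(k < dd) (k \in A i)%:R *: P k.
    by have := @STEP2 _ _ _ P _ W m (fun i k => (k \in A i)%:R) [::]; rewrite big_nil mul1r.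
  apply: eq_bigr => i _; rewrite big_mkcond; apply: eq_bigr => k _.
  by case: (k \in A i); rewrite ?scale1r ?scale0r.
- move=> H m A mA; rewrite /cyl_prob; apply/eqd.
  have W : forall s, ((p1 - p2) *m \prod_(k <- s) P k *m (const_mx 1 : 'cV[R]_n)) 0 0 = 0.
    case => [|k0 s].
      have := H 0 (fun _ => finset.set0); rewrite /fin_cyl_prob big_ord0 big_nil.
      by move/eqd.
    have := H (size (k0 :: s)) (fun j => (finset.set1 (nth k0 (k0 :: s) j))).
    rewrite /fin_cyl_prob => /eqd.
    suff -> : \prod_(k <- k0 :: s) P k
      = \prod_(i < size (k0 :: s)) \sum_(a in (finset.set1 (nth k0 (k0 :: s) i))) P a by [].
    rewrite (big_nth k0) big_mkord; apply: eq_bigr => i _; by rewrite big_set1.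
  have := @STEP2 _ _ _ P _ W m (fun i k => fine (\int[mu]_(x in A i) (f k x)%:E)) [::].
  rewrite big_nil mul1r.
  suff -> : \prod_(i < m) int_mx mu Psi (A i)
    = \prod_(i < m) \sum_(k < dd) fine (\int[mu]_(x in A i) (f k x)%:E) *: P k by [].
  by apply: eq_bigr => i _; rewrite INTs.
Qed.
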